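(* Let $\mathcal{D}$ be a domain, $G$ a subgroup of $\mathrm{IET}(\mathcal{D})$, $(A,+)$ a finite abelian group, and $J\subset\mathcal{D}$ a subdomain. Let $\mathcal{F}=A^{\mathcal{D}}$ be the additive group of all functions $\mathcal{D}\to A$, on which $G$ acts by $g\cdot f=f\circ g^{-1}$. For $a\in A$ let $a\mathbb{1}_J\in\mathcal{F}$ be the function equal to $a$ on $J$ and $0$ elsewhere, and let $\mathcal{F}_J$ be the smallest $G$-invariant subgroup of $\mathcal{F}$ containing all $a\mathbb{1}_J$, $a\in A$. Then the semidirect product $\mathcal{F}_J\rtimes G$ embeds in $\mathrm{IET}$.
   Context: A domain is a non-empty disjoint union of finitely many oriented circles and oriented half-open bounded intervals closed on the left; a subdomain is a subset that is itself a domain. $\mathrm{IET}(\mathcal{D})$ is the group of bijections of $\mathcal{D}$ that are orientation-preserving piecewise isometries, left-continuous, with finitely many discontinuity points; $\mathrm{IET}=\mathrm{IET}([0,1))$. *)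

(* Defs.v *)
From Stdlib Require Import Reals List.
From mathcomp Require Import all_boot all_algebra.
Set Implicit Arguments. Unset Strict Implicit. Unset Printing Implicit Defensive.
Import GRing.Theory.
Local Open Scope R_scope.

(* A domain: a nonempty finite list of components; each component is
   (is_circle, length L) with L > 0. A point of component i has coordinate
   x in [0, L); for a circle, the coordinate is the arc-length position
   measured from a base point in the positive orientation. *)
Record domain := Domain {
  dcomps : seq (bool * R);
  dcomps_nonempty : dcomps <> [::];
  dcomps_pos : forall c, List.In c dcomps -> 0 < c.2 }.

Definition comp_len (D : domain) (i : nat) : R := (nth (false, R0) (dcomps D) i).2.

Definition in_dom (D : domain) (p : nat * R) : Prop :=
  (p.1 < size (dcomps D))%N /\ (0 <= p.2 < comp_len D p.1).

Definition point (D : domain) := {p : nat * R | in_dom D p}.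

Definition pcomp (D : domain) (p : point D) : nat := (proj1_sig p).1.
Definition pcoord (D : domain) (p : point D) : R := (proj1_sig p).2.

(* Orientation-preserving piecewise isometry, continuous on each piece
   [c, c') (closed on the left), with finitely many discontinuity points:
   there is a finite set of cut points such that on each component, between
   consecutive cuts, g maps into a single component and is a translation. *)
Definition piecewise_translation (D : domain) (g : point D -> point D) : Prop :=
  exists cuts : seq (nat * R),
    forall p q : point D, pcomp p = pcomp q -> (pcoord p <= pcoord q) ->
      (forall c, List.In c cuts -> c.1 = pcomp p ->
         ~ (pcoord p < c.2 <= pcoord q)) ->
      pcomp (g q) = pcomp (g p) /\
      (pcoord (g q) - pcoord (g p) = pcoord q - pcoord p).

Definition IET (D : domain) (g : point D -> point D) : Prop :=
  bijective g /\ piecewise_translation g.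

Definition ginv (D : domain) (g h : point D -> point D) : Prop :=
  (forall x, h (g x) = x) /\ (forall x, g (h x) = x).

Record is_subgroup_IET (D : domain) (G : (point D -> point D) -> Prop) : Prop := {
  sg_IET : forall g, G g -> IET g;
  sg_id : G id;
  sg_comp : forall g h, G g -> G h -> G (g \o h);
  sg_inv : forall g, G g -> exists h, G h /\ ginv g h }.

(* J is a subdomain of D: a nonempty finite union of half-open coordinate
   intervals [a, b) inside components (arcs of circles crossing the base
   point are unions of two such intervals; a whole circle is [0, L)). *)
Definition subdomain (D : domain) (J : point D -> bool) : Prop :=
  (exists p, J p) /\
  exists ivs : seq (nat * R * R),
    (forall iv, List.In iv ivs ->
       (iv.1.1 < size (dcomps D))%N /\ (0 <= iv.1.2 < iv.2) /\
       (iv.2 <= comp_len D iv.1.1)) /\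
    (forall p : point D, J p <->
       exists iv, List.In iv ivs /\ pcomp p = iv.1.1 /\
                  (iv.1.2 <= pcoord p < iv.2)).

Inductive FJ (D : domain) (G : (point D -> point D) -> Prop) (A : finZmodType)
    (J : point D -> bool) : (point D -> A) -> Prop :=
| FJ_gen (a : A) : FJ G J (fun p => if J p then a else (GRing.zero : A))
| FJ_zero : FJ G J (fun _ => (GRing.zero : A))
| FJ_add f1 f2 : FJ G J f1 -> FJ G J f2 -> FJ G J (fun p => GRing.add (f1 p) (f2 p))
| FJ_opp f : FJ G J f -> FJ G J (fun p => GRing.opp (f p))
| FJ_act f g h : FJ G J f -> G g -> G h -> ginv g h -> FJ G J (f \o h).

Lemma unit_nonempty : [:: (false, 1)] <> [::]. Proof. by []. Qed.
Lemma unit_pos : forall c, List.In c [:: (false, 1)] -> 0 < c.2.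
Proof. move=> c [<-|[]] /=; exact: Rlt_0_1. Qed.
Definition unit_interval : domain := Domain unit_nonempty unit_pos.

(* Main.v *)
Require Import Defs.
From Stdlib Require Import Reals List Lra Lia ClassicalEpsilon FunctionalExtensionality ProofIrrelevance.
From mathcomp Require Import all_boot all_algebra.
From mathcomp Require Import zify.
Set Implicit Arguments. Unset Strict Implicit. Unset Printing Implicit Defensive.

Import Defs.
Import GRing.Theory.
Local Open Scope R_scope.

Lemma point_eq (D : domain) (p q : point D) : proj1_sig p = proj1_sig q -> p = q.
Proof.
  destruct p as [x Hx], q as [y Hy]; simpl; intro E; subst; f_equal; apply proof_irrelevance.
Qed.

Lemma pt_range (D : domain) (p : point D) : 0 <= pcoord p < comp_len D (pcomp p).
Proof. exact: (proj2_sig p).2. Qed.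
Lemma pt_comp (D : domain) (p : point D) : (pcomp p < size (dcomps D))%N.
Proof. exact: (proj2_sig p).1. Qed.

Definition pwc (D : domain) (X : Type) (F : point D -> X) : Prop :=
  exists cuts : list (nat * R), forall p q : point D, pcomp p = pcomp q -> pcoord p <= pcoord q ->
   (forall c, List.In c cuts -> c.1 = pcomp p -> ~ (pcoord p < c.2 <= pcoord q)) -> F p = F q.

Lemma pwc_const (D : domain) X (x : X) : pwc (fun _ : point D => x).
Proof. by exists nil. Qed.

Lemma pwc_map2 (D : domain) X Y Z (F1 : point D -> X) (F2 : point D -> Y) (H : X -> Y -> Z) :
  pwc F1 -> pwc F2 -> pwc (fun p => H (F1 p) (F2 p)).
Proof.
  move=> [c1 h1] [c2 h2]; exists (c1 ++ c2) => p q e l hc.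
  rewrite (h1 p q e l) ?(h2 p q e l) // => c hin; apply: hc; apply List.in_or_app; auto.
Qed.

Lemma pwc_map (D : domain) X Z (F1 : point D -> X) (H : X -> Z) :
  pwc F1 -> pwc (fun p => H (F1 p)).
Proof.
  move=> h; exact: (pwc_map2 (fun x (_ : unit) => H x) h (pwc_const D tt)).
Qed.

Lemma pwc_J (D : domain) (J : point D -> bool) : subdomain J -> pwc J.
Proof.
  move=> [_ [ivs [_ HJ]]].
  exists (List.flat_map (fun iv => [:: (iv.1.1, iv.1.2); (iv.1.1, iv.2)]) ivs) => p q e l hc.
  have cut1 : forall iv, List.In iv ivs -> iv.1.1 = pcomp p -> ~ (pcoord p < iv.1.2 <= pcoord q).
    move=> iv hi hc1; apply: (hc (iv.1.1, iv.1.2)) => //.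
    apply List.in_flat_map; exists iv; split => //; left => //.
  have cut2 : forall iv, List.In iv ivs -> iv.1.1 = pcomp p -> ~ (pcoord p < iv.2 <= pcoord q).
    move=> iv hi hc1; apply: (hc (iv.1.1, iv.2)) => //.
    apply List.in_flat_map; exists iv; split => //; right; left => //.
  case Jp: (J p); case Jq: (J q) => //.
  - have [iv [hi [hc1 [h1 h2]]]] := (HJ p).1 Jp.
    have : J q.
      apply (HJ q).2; exists iv; split => //; split; first by rewrite -e.
      split; first lra.
      destruct (Rlt_le_dec (pcoord q) iv.2) as [h|h] => //.
      exfalso; apply: (cut2 iv hi (esym hc1)); lra.
    by rewrite Jq.
  - have [iv [hi [hc1 [h1 h2]]]] := (HJ q).1 Jq.
    have : J p.
      apply (HJ p).2; exists iv; split => //; split; first by rewrite e.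
      split; last lra.
      destruct (Rle_lt_dec iv.1.2 (pcoord p)) as [h|h] => //.
      exfalso; apply: (cut1 iv hi); [by rewrite e | lra].
    by rewrite Jp.
Qed.

Lemma pwc_comp (D : domain) X (f : point D -> X) (h hinv : point D -> point D) :
  pwc f -> piecewise_translation h -> cancel h hinv -> pwc (f \o h).
Proof.
  move=> [cf Hf] [ch Hh] K.
  exists (ch ++ List.map (fun c => match excluded_middle_informative (in_dom D c) with
       | left H => proj1_sig (hinv (exist _ c H)) | right _ => c end) cf) => p q e l hc.
  have [e' d'] := Hh p q e l (fun c hi => hc c (List.in_or_app _ _ _ (or_introl hi))).
  apply: Hf; first by rewrite e'.
  - lra.
  - move=> c hin hc1 [lo hi].
    have Hc : in_dom D c.
      split; first by rewrite hc1; exact: pt_comp.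
      have := pt_range (h q); have := pt_range (h p).
      rewrite e' -hc1. lra.
    have Hz : in_dom D (pcomp p, pcoord p + (c.2 - pcoord (h p))).
      split; first exact: pt_comp.
      have := pt_range p; have := pt_range q. rewrite /= -e. lra.
    pose z : point D := exist _ _ Hz.
    have zc : pcoord z = pcoord p + (c.2 - pcoord (h p)) by [].
    have zp : pcomp z = pcomp p by [].
    have hz : forall c0, List.In c0 ch -> c0.1 = pcomp p -> ~ (pcoord p < c0.2 <= pcoord z).
      move=> c0 hi0 hc0 [a1 a2]; apply: (hc c0 (List.in_or_app _ _ _ (or_introl hi0)) hc0).
      rewrite zc in a2. lra.
    have lz : pcoord p <= pcoord z by rewrite zc; lra.
    have [ez dz] := Hh p z erefl lz hz.
    have hzc : h z = exist _ c Hc.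
      have E2 : pcoord (h z) = c.2 by rewrite zc in dz; lra.
      have E1 : pcomp (h z) = c.1 by rewrite ez.
      apply: point_eq; rewrite /=. rewrite [proj1_sig (h z)]surjective_pairing.
      move: E1 E2; rewrite /pcomp /pcoord; case: (c) => c1 c2 /= -> ->; done.
    have hin2 : List.In (proj1_sig z) (List.map (fun c => match excluded_middle_informative (in_dom D c) with
       | left H => proj1_sig (hinv (exist _ c H)) | right _ => c end) cf).
      apply List.in_map_iff; exists c; split => //.
      destruct (excluded_middle_informative (in_dom D c)) as [H'|H'] => //.
      have -> : exist _ c H' = h z by rewrite hzc; apply: point_eq.
      by rewrite K.
    apply: (hc _ (List.in_or_app _ _ _ (or_intror hin2)) zp).
    change (pcoord p < pcoord z <= pcoord q). rewrite zc. lra.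
Qed.

Lemma FJ_pwc (D : domain) G (A : finZmodType) (J : point D -> bool) (f : point D -> A) :
  is_subgroup_IET G -> subdomain J -> FJ G J f -> pwc f.
Proof.
  move=> HG HJ; elim => [a| |f1 f2 _ h1 _ h2|f1 _ h1|f1 g h _ h1 Gg Gh gi].
  - exact: (pwc_map (fun b : bool => if b then a else 0%R) (pwc_J HJ)).
  - exact: pwc_const.
  - exact: pwc_map2.
  - exact: pwc_map.
  - apply: (pwc_comp h1 (sg_IET HG Gh).2); exact: gi.2.
Qed.

Definition Bd (D : domain) : R := List.fold_right (fun c acc => Rmax c.2 acc) 1 (dcomps D).
Definition nD (D : domain) : nat := size (dcomps D).
Definition TT (D : domain) (A : finZmodType) : R := INR (nD D * #|A|) * Bd D.
Definition slot (D : domain) (A : finZmodType) (i : nat) (a : A) : nat := (i * #|A| + enum_rank a)%N.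
Definition ecoord (D : domain) (A : finZmodType) (p : point D) (a : A) : R :=
  (INR (slot D (pcomp p) a) * Bd D + pcoord p) / TT D A.

Lemma B_ge1 (D : domain) : 1 <= Bd D.
Proof.
  rewrite /Bd; elim: (dcomps D) => [|c l IH] /=; first lra.
  apply: Rle_trans IH (Rmax_r _ _).
Qed.

Lemma len_le_B (D : domain) i : (i < nD D)%N -> comp_len D i <= Bd D.
Proof.
  rewrite /nD /comp_len /Bd; elim: (dcomps D) i => [|c l IH] [|i] //= hi.
  - exact: Rmax_l.
  - apply: Rle_trans (IH i hi) (Rmax_r _ _).
Qed.

Lemma N_pos (A : finZmodType) : (0 < #|A|)%N.
Proof. exact: leq_ltn_trans (leq0n _) (ltn_ord (enum_rank (0%R : A))). Qed.

Lemma rank_lt (A : finZmodType) (a : A) : (enum_rank a < #|A|)%N.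
Proof. exact: ltn_ord. Qed.

Lemma n_pos (D : domain) : (0 < nD D)%N.
Proof. rewrite /nD; have := @dcomps_nonempty D; case: (dcomps D) => //. Qed.

Lemma T_pos (D : domain) (A : finZmodType) : 0 < TT D A.
Proof.
  rewrite /TT; apply: Rmult_lt_0_compat; last by have := B_ge1 D; lra.
  apply: lt_0_INR; apply/ltP; have := N_pos A; have := n_pos D; nia.
Qed.

Lemma slot_lt (D : domain) (A : finZmodType) i (a : A) : (i < nD D)%N -> (slot D i a < nD D * #|A|)%N.
Proof. rewrite /slot => hi; have := rank_lt a; nia. Qed.

Lemma div_lt T a b : 0 < T -> a < b -> a / T < b / T.
Proof. move=> hT hab; apply: Rmult_lt_compat_r => //; exact: Rinv_0_lt_compat. Qed.
Lemma div_le T a b : 0 < T -> a <= b -> a / T <= b / T.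
Proof. move=> hT hab; apply: Rmult_le_compat_r => //; left; exact: Rinv_0_lt_compat. Qed.
Lemma div_lt_inv T a b : 0 < T -> a / T < b / T -> a < b.
Proof. move=> hT hab; apply: (Rmult_lt_reg_r (/ T)) => //; exact: Rinv_0_lt_compat. Qed.
Lemma div_le_inv T a b : 0 < T -> a / T <= b / T -> a <= b.
Proof. move=> hT hab; apply: (Rmult_le_reg_r (/ T)) => //; exact: Rinv_0_lt_compat. Qed.
Lemma mul_div T v : 0 < T -> v = (v * T) / T.
Proof. move=> hT; field; lra. Qed.

Lemma slot_bound (D : domain) (A : finZmodType) m x :
  (m < nD D * #|A|)%N -> 0 <= x < Bd D -> 0 <= INR m * Bd D + x < TT D A.
Proof.
  move=> hm hx; rewrite /TT.
  have hB := B_ge1 D.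
  have h0 : 0 <= INR m := pos_INR m.
  have h1 : INR m + 1 <= INR (nD D * #|A|).
    rewrite -S_INR; apply: le_INR; apply/leP; exact: hm.
  have h2 : (INR m + 1) * Bd D <= INR (nD D * #|A|) * Bd D by apply: Rmult_le_compat_r; lra.
  have h3 : 0 <= INR m * Bd D by apply: Rmult_le_pos; lra.
  lra.
Qed.

Lemma unit_dom x : 0 <= x < 1 -> in_dom unit_interval (0%N, x).
Proof. move=> h; split => //. Qed.

Lemma unit_comp0 (u : point unit_interval) : pcomp u = 0%N.
Proof. have := pt_comp u; rewrite /=; case: (pcomp u) => //. Qed.

Lemma unit_range (u : point unit_interval) : 0 <= pcoord u < 1.
Proof. have := pt_range u; rewrite unit_comp0 //. Qed.

Lemma ecoord_range (D : domain) (A : finZmodType) (p : point D) (a : A) : 0 <= ecoord p a < 1.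
Proof.
  have hT := T_pos D A.
  have hi := pt_comp p. have hx := pt_range p.
  have hl := len_le_B hi.
  have [h1 h2] := slot_bound (slot_lt a hi) (conj hx.1 (Rlt_le_trans _ _ _ hx.2 hl)).
  rewrite /ecoord; split.
  - have := div_le hT h1; rewrite /Rdiv Rmult_0_l //.
  - have := div_lt hT h2; rewrite /Rdiv Rinv_r //; lra.
Qed.

Definition E (D : domain) (A : finZmodType) (p : point D) (a : A) : point unit_interval :=
  exist _ (0%N, ecoord p a) (unit_dom (ecoord_range p a)).

Lemma E_inj (D : domain) (A : finZmodType) (p p' : point D) (a a' : A) :
  E p a = E p' a' -> p = p' /\ a = a'.
Proof.
  move=> /(f_equal (fun u => pcoord u)) /=; rewrite /ecoord => he.
  have hT := T_pos D A.
  have he2 : INR (slot D (pcomp p) a) * Bd D + pcoord p = INR (slot D (pcomp p') a') * Bd D + pcoord p'.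
    rewrite (mul_div (INR (slot D (pcomp p) a) * Bd D + pcoord p) hT).
    rewrite (mul_div (INR (slot D (pcomp p') a') * Bd D + pcoord p') hT).
    rewrite /Rdiv in he; rewrite /Rdiv; field_simplify; [|lra|lra].
    have := Rmult_eq_compat_r (TT D A) _ _ he. rewrite !Rmult_assoc Rinv_l; last lra.
    rewrite !Rmult_1_r. move=> ->. field; lra.
  have hB := B_ge1 D.
  have hx := pt_range p. have hx' := pt_range p'.
  have hl := len_le_B (pt_comp p). have hl' := len_le_B (pt_comp p').
  have key : forall m m' x x', 0 <= x < Bd D -> 0 <= x' < Bd D ->
      INR m * Bd D + x = INR m' * Bd D + x' -> m = m'.
    move=> m m' x x' h1 h2 h3.
    have aux : forall m m' x x', 0 <= x < Bd D -> 0 <= x' < Bd D ->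
       INR m * Bd D + x = INR m' * Bd D + x' -> ~ (m < m')%coq_nat.
      move=> m0 m0' x0 x0' g1 g2 g3 g4.
      have : INR m0 + 1 <= INR m0' by rewrite -S_INR; apply: le_INR.
      move=> g5.
      have : (INR m0 + 1) * Bd D <= INR m0' * Bd D by apply: Rmult_le_compat_r; lra.
      lra.
    case: (Nat.lt_trichotomy m m') => [h|[h|h]] //.
    - by exfalso; apply: (aux _ _ _ _ h1 h2 h3).
    - by exfalso; apply: (aux _ _ _ _ h2 h1 (esym h3)).
  have hs := key _ _ _ _ (conj hx.1 (Rlt_le_trans _ _ _ hx.2 hl))
                         (conj hx'.1 (Rlt_le_trans _ _ _ hx'.2 hl')) he2.
  move: hs he2; rewrite /slot => hs.
  have r1 := rank_lt a. have r2 := rank_lt a'.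
  have hi : pcomp p = pcomp p' by nia.
  have hk : nat_of_ord (enum_rank a) = nat_of_ord (enum_rank a') by nia.
  have ha : a = a' by apply: enum_rank_inj; apply: val_inj.
  rewrite hs => he2.
  have hc : pcoord p = pcoord p' by lra.
  split => //; apply: point_eq.
  rewrite [proj1_sig p]surjective_pairing [proj1_sig p']surjective_pairing.
  exact: f_equal2 hi hc.
Qed.

Definition dec (D : domain) (A : finZmodType) (u : point unit_interval) : option (point D * A) :=
  match excluded_middle_informative (exists pa : point D * A, E pa.1 pa.2 = u) with
  | left H => Some (proj1_sig (constructive_indefinite_description _ H))
  | right _ => None end.

Definition phi (D : domain) (A : finZmodType) (F : point D * A -> point D * A)
   (u : point unit_interval) : point unit_interval :=
  match dec D A u with Some pa => E (F pa).1 (F pa).2 | None => u end.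

Lemma phi_E (D : domain) (A : finZmodType) (F : point D * A -> point D * A) p a :
  phi F (E p a) = E (F (p, a)).1 (F (p, a)).2.
Proof.
  rewrite /phi /dec; case: excluded_middle_informative => [H|H]; last first.
    by exfalso; apply: H; exists (p, a).
  case: constructive_indefinite_description => [[p' a'] /= He].
  by have [-> ->] := E_inj He.
Qed.

Lemma phi_nE (D : domain) (A : finZmodType) (F : point D * A -> point D * A) u :
  ~ (exists pa : point D * A, E pa.1 pa.2 = u) -> phi F u = u.
Proof.
  move=> H; rewrite /phi /dec; case: excluded_middle_informative => // H'.
Qed.

Lemma phi_comp (D : domain) (A : finZmodType) (F1 F2 : point D * A -> point D * A) :
  phi (F1 \o F2) = phi F1 \o phi F2.
Proof.
  apply: functional_extensionality => u /=.
  case: (classic (exists pa : point D * A, E pa.1 pa.2 = u)) => [[[p a] /= <-]|H].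
  - rewrite phi_E /=. rewrite phi_E. by rewrite [F2 (p, a)]surjective_pairing phi_E /=.
  - by rewrite !phi_nE.
Qed.

Lemma phi_id (D : domain) (A : finZmodType) : phi (@id (point D * A)) = id.
Proof.
  apply: functional_extensionality => u.
  case: (classic (exists pa : point D * A, E pa.1 pa.2 = u)) => [[[p a] /= <-]|H].
  - by rewrite phi_E.
  - by rewrite phi_nE.
Qed.

Lemma phi_inj (D : domain) (A : finZmodType) (F1 F2 : point D * A -> point D * A) :
  phi F1 = phi F2 -> F1 = F2.
Proof.
  move=> H; apply: functional_extensionality => [[p a]].
  have := f_equal (fun f => f (E p a)) H; rewrite /= !phi_E => /E_inj [h1 h2].
  by rewrite [F1 _]surjective_pairing [F2 _]surjective_pairing h1 h2.
Qed.

Lemma phi_bij (D : domain) (A : finZmodType) (F : point D * A -> point D * A) :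
  bijective F -> bijective (phi F).
Proof.
  case=> Fi K1 K2; exists (phi Fi) => u.
  - have := f_equal (fun f => f u) (phi_comp Fi F); rewrite /= => <-.
    have -> : Fi \o F = id by apply: functional_extensionality => x /=; rewrite K1.
    by rewrite phi_id.
  - have := f_equal (fun f => f u) (phi_comp F Fi); rewrite /= => <-.
    have -> : F \o Fi = id by apply: functional_extensionality => x /=; rewrite K2.
    by rewrite phi_id.
Qed.

Definition blockpw (D : domain) (A : finZmodType) (F : point D * A -> point D * A) : Prop :=
  exists C : list (nat * R), forall p q : point D, pcomp p = pcomp q -> pcoord p <= pcoord q ->
    (forall c, List.In c C -> c.1 = pcomp p -> ~ (pcoord p < c.2 <= pcoord q)) ->
    forall a, (F (q, a)).2 = (F (p, a)).2 /\ pcomp (F (q, a)).1 = pcomp (F (p, a)).1 /\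
       pcoord (F (q, a)).1 - pcoord (F (p, a)).1 = pcoord q - pcoord p.

Lemma diff_div K K2 x y x' y' T : y' - x' = y - x ->
  (K + y') / T - (K + x') / T = (K2 + y) / T - (K2 + x) / T.
Proof. move=> h; replace y' with (x' + (y - x)) by lra; rewrite /Rdiv; ring. Qed.

Lemma pcoordE (D : domain) (A : finZmodType) (p : point D) (a : A) : pcoord (E p a) = ecoord p a.
Proof. by []. Qed.

Lemma E_of (D : domain) (A : finZmodType) (a : A) i (u : point unit_interval) :
  (i < nD D)%N ->
  INR (slot D i a) * Bd D <= pcoord u * TT D A < INR (slot D i a) * Bd D + comp_len D i ->
  exists p : point D, E p a = u /\ pcomp p = i /\
     pcoord p = pcoord u * TT D A - INR (slot D i a) * Bd D.
Proof.
  move=> hi [h1 h2].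
  have hT := T_pos D A.
  have Hp : in_dom D (i, pcoord u * TT D A - INR (slot D i a) * Bd D).
    split => //=; lra.
  exists (exist _ _ Hp); split => //; apply: point_eq.
  rewrite [proj1_sig u]surjective_pairing /=.
  have -> : (proj1_sig u).1 = 0%N by exact: unit_comp0.
  f_equal. change (( INR (slot D i a) * Bd D + (pcoord u * TT D A - INR (slot D i a) * Bd D)) / TT D A = pcoord u).
  field; lra.
Qed.

Lemma phi_pt (D : domain) (A : finZmodType) (F : point D * A -> point D * A) :
  blockpw F -> piecewise_translation (phi F).
Proof.
  move=> [C HF].
  have hT := T_pos D A.
  set L := 0 :: List.map snd C ++ List.map (comp_len D) (List.seq 0 (nD D)).
  exists (List.flat_map (fun m => List.map (fun t => (0%N, (INR m * Bd D + t) / TT D A)) L)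
            (List.seq 0 (nD D * #|A|))) => u v _ luv hc.
  have hc' : forall m t, (m < nD D * #|A|)%N -> List.In t L ->
      ~ (pcoord u < (INR m * Bd D + t) / TT D A <= pcoord v).
    move=> m t hm ht; apply: (hc (0%N, (INR m * Bd D + t) / TT D A)); last by rewrite unit_comp0.
    apply List.in_flat_map; exists m; split.
    - apply List.in_seq; move/ltP: hm; lia.
    - apply List.in_map_iff; exists t; split => //.
  split; first by rewrite !unit_comp0.
  case: (classic (exists pa : point D * A, E pa.1 pa.2 = u)) => [[[p a] /= Hu]|Hu].
  - subst u.
    have hi := pt_comp p. have hx := pt_range p.
    have hm := slot_lt a hi.
    set m := slot D (pcomp p) a in hm.
    have hlen : List.In (comp_len D (pcomp p)) L.
      right; apply List.in_or_app; right; apply List.in_map_iff; exists (pcomp p); split => //.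
      apply List.in_seq; move/ltP: hi; rewrite /nD; lia.
    rewrite pcoordE /ecoord -/m in luv hc' *.
    have hvlt : pcoord v < (INR m * Bd D + comp_len D (pcomp p)) / TT D A.
      case: (Rlt_le_dec (pcoord v) ((INR m * Bd D + comp_len D (pcomp p)) / TT D A)) => // h.
      exfalso; apply: (hc' _ _ hm hlen); split => //.
      apply: div_lt => //; lra.
    rewrite (mul_div (pcoord v) hT) in luv hvlt.
    have hv1 := div_le_inv hT luv. have hv2 := div_lt_inv hT hvlt.
    have h0 : INR m * Bd D <= pcoord v * TT D A by case: hx => ? ?; lra.
    have [q [Hq [hqc hqx]]] := @E_of D A a (pcomp p) v hi (conj h0 hv2).
    rewrite -/m in hqx.
    have hxy : pcoord p <= pcoord q by rewrite hqx; lra.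
    have hcut : forall c, List.In c C -> c.1 = pcomp p -> ~ (pcoord p < c.2 <= pcoord q).
      move=> c hin hci [h1 h2]; apply: (hc' m c.2 hm).
      - right; apply List.in_or_app; left; apply List.in_map_iff; exists c; split => //.
      - split; first by apply: div_lt => //; lra.
        rewrite (mul_div (pcoord v) hT); apply: div_le => //; lra.
    have [e2 [e1 ed]] := HF p q (esym hqc) hxy hcut a.
    rewrite -Hq !phi_E !pcoordE /ecoord e1 e2 hqc -/m.
    exact: diff_div.
  - rewrite (phi_nE F Hu).
    case: (classic (exists pa : point D * A, E pa.1 pa.2 = v)) => [[[q a] /= Hv]|Hv]; last first.
      by rewrite (phi_nE F Hv).
    subst v; exfalso.
    have hi := pt_comp q. have hy := pt_range q.
    have hm := slot_lt a hi.
    set m := slot D (pcomp q) a in hm.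
    have h0 : List.In 0 L by left.
    rewrite pcoordE /ecoord -/m in luv hc'.
    have hu1 : INR m * Bd D <= pcoord u * TT D A.
      case: (Rle_lt_dec (INR m * Bd D) (pcoord u * TT D A)) => // h.
      exfalso; apply: (hc' m 0 hm h0); split.
      - rewrite (mul_div (pcoord u) hT); apply: div_lt => //; lra.
      - apply: div_le => //; case: hy => ? ?; lra.
    have hu2 : pcoord u * TT D A < INR m * Bd D + comp_len D (pcomp q).
      rewrite (mul_div (pcoord u) hT) in luv; have := div_le_inv hT luv; case: hy => ? ?; lra.
    have [p [Hp _]] := @E_of D A a (pcomp q) u hi (conj hu1 hu2).
    apply: Hu; exists (p, a); exact: Hp.
Qed.
Local Close Scope R_scope.

Definition Phi (D : domain) (A : finZmodType) (f : point D -> A) (g : point D -> point D)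
  (pa : point D * A) : point D * A := (g pa.1, (pa.2 + f (g pa.1))%R).

Lemma Phi_block (D : domain) G (A : finZmodType) (J : point D -> bool) (f : point D -> A) g :
  is_subgroup_IET G -> subdomain J -> FJ G J f -> G g -> blockpw (Phi f g).
Proof.
  move=> HG HJ Hf Gg.
  have [[h K1 K2] [cg Hg]] := sg_IET HG Gg.
  have [ck Hk] := pwc_comp (FJ_pwc HG HJ Hf) (sg_IET HG Gg).2 K1.
  exists (cg ++ ck) => p q e l hc a.
  have [e1 d1] := Hg p q e l (fun c hi => hc c (List.in_or_app _ _ _ (or_introl hi))).
  have fk := Hk p q e l (fun c hi => hc c (List.in_or_app _ _ _ (or_intror hi))).
  rewrite /Phi /=; rewrite /= in fk; rewrite fk; split => //.
Qed.

Theorem mainTheorem19 (D : domain) (G : (point D -> point D) -> Prop)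
    (A : finZmodType) (J : point D -> bool) :
  is_subgroup_IET G -> subdomain J ->
  exists phi : (point D -> A) -> (point D -> point D) ->
               (point unit_interval -> point unit_interval),
    (forall f g, FJ G J f -> G g -> IET (phi f g)) /\
    (forall f1 g1 f2 g2, FJ G J f1 -> G g1 -> FJ G J f2 -> G g2 ->
        phi f1 g1 = phi f2 g2 -> f1 = f2 /\ g1 = g2) /\
    (forall f1 g1 h1 f2 g2, FJ G J f1 -> G g1 -> G h1 -> ginv g1 h1 ->
        FJ G J f2 -> G g2 ->
        phi (fun p => GRing.add (f1 p) (f2 (h1 p))) (g1 \o g2) = phi f1 g1 \o phi f2 g2).
Proof.
  move=> HG HJ.
  exists (fun f g => phi (Phi f g)); split; [|split].
  - move=> f g Hf Gg; split.
    + apply: phi_bij.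
      have [h K1 K2] := (sg_IET HG Gg).1.
      exists (fun pa => (h pa.1, (pa.2 - f pa.1)%R)).
      * by case=> p a; rewrite /Phi /= K1 addrK.
      * by case=> p a; rewrite /Phi /= K2 subrK.
    + apply: phi_pt; exact: (Phi_block HG HJ Hf Gg).
  - move=> f1 g1 f2 g2 Hf1 Gg1 Hf2 Gg2 /phi_inj EF.
    have eg : g1 = g2.
      apply: functional_extensionality => x.
      exact: (f_equal (fun F => (F (x, 0%R)).1) EF).
    split => //; apply: functional_extensionality => y.
    have [h K1 K2] := (sg_IET HG Gg1).1.
    have := f_equal (fun F => (F (h y, 0%R)).2) EF.
    by rewrite /Phi /= -eg K2 !add0r.
  - move=> f1 g1 h1 f2 g2 Hf1 Gg1 Gh1 gi Hf2 Gg2.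
    rewrite -phi_comp; f_equal; apply: functional_extensionality => [[p a]].
    rewrite /Phi /= gi.1; f_equal.
    by rewrite [(f1 _ + _)%R]addrC addrA.
Qed.
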